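(* Let $F$ be a forest of rooted trees $T_1,\dots,T_k$ on $\{1,\dots,n\}$ (viewed as a shrub, with height equal to distance to the root), and let $i$ be the root of $T_1$. Then, for the anticyclic action, $\tau_{0,i}\cdot F=-\big(B_-(T_1)\sqcup B_+(i,T_2,\dots,T_k)\big)$, where $\tau_{0,i}\in\mathfrak{S}_{n+1}$ is the transposition of $0$ and $i$.
   Context: A shrub $P$ on a finite set $I$ is a set $E$ of edges with a height function $h_P:I\to\mathbb{N}$ satisfying: edges join vertices whose heights differ by $1$; every vertex of positive height covers some vertex ($j$ covers $i$ if $\{i,j\}\in E$ and $h(j)=h(i)+1$); no four distinct $a,b,c,d$ with $a$ covering $b,c$, $c$ covering $d$, $\{b,d\}\notin E$; no five distinct $a,b,c,d,e$ with $a$ covering $c,d$, $b$ covering $d,e$, $\{a,e\},\{b,c\}\notin E$. A forest of rooted trees is a shrub with height = distance to the root of its tree. For a forest $F$ of trees $T_1,\dots,T_k$ and a new vertex $j$, $B_+(j,F)=B_+(j,T_1,\dots,T_k)$ is the rooted tree obtained by joining the roots of the $T_l$ to a new root $j$; for a rooted tree $T$, $B_-(T)$ is the forest obtained by deleting the root of $T$. For a shrub $P$, $f_P\in\mathbb{Q}(u_1,\dots,u_n)$ is its image under the operad morphism $\kappa:\operatorname{Arb}\to\operatorname{Mould}$ determined by $\kappa([2\triangleleft1])=1/(u_1(u_1+u_2))$ and $\kappa([1][2])=1/(u_1u_2)$; for a forest $F$, $f_F=\prod_{j}1/u[\text{subtree of }F\text{ rooted at }j]$, where $u[S]=\sum_{k\in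 S}u_k$. $\mathfrak{S}_{n+1}$ (permutations of $\{0,\dots,n\}$) acts on $\mathbb{Q}(u_1,\dots,u_n)$ by setting $u_0=-(u_1+\dots+u_n)$ and permuting $u_0,\dots,u_n$. Signed shrubs are pairs $\pm P$; $\pm P\mapsto\pm f_P$ is injective with image stable under $\mathfrak{S}_{n+1}$, and the anticyclic action is $\sigma\cdot(\varepsilon P)=\varepsilon'P'$ where $\varepsilon'f_{P'}=\sigma\cdot(\varepsilon f_P)$. *)

(* Defs.v *)
From HB Require Import structures.
From mathcomp Require Import all_boot all_order all_algebra all_fingroup.
From mathcomp Require Import fraction.
From mathcomp Require Import mpoly.
Set Implicit Arguments. Unset Strict Implicit. Unset Printing Implicit Defensive.
Import GRing.Theory.
Local Open Scope ring_scope.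

(* The field Q(u_1,...,u_n); the variable u_{k+1} is 'X_k for k : 'I_n. *)
Definition RF (n : nat) := {fraction {mpoly rat[n]}}.

(* Variables u_0,...,u_n indexed by 'I_n.+1, with u_0 = -(u_1+...+u_n). *)
Definition uvar (n : nat) (k : 'I_n.+1) : {mpoly rat[n]} :=
  match unlift ord0 k with
  | Some j => 'X_j
  | None => - \sum_(j < n) 'X_j
  end.

(* Left action of S_{n+1} on polynomials by permuting u_0,...,u_n:
   (s . p)(u_1..u_n) = p(u_{s^-1(1)}, ..., u_{s^-1(n)}). *)
Definition perm_poly (n : nat) (s : 'S_n.+1) (p : {mpoly rat[n]}) : {mpoly rat[n]} :=
  p \mPo [tuple uvar ((s^-1)%g (lift ord0 j)) | j < n].

(* Extension to rational functions: s . (a/b) = (s . a)/(s . b)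
   (independent of the representative since s acts by a ring automorphism). *)
Definition act_frac (n : nat) (s : 'S_n.+1) (x : RF n) : RF n :=
  let r := generic_quotient.repr x in
  tofrac (perm_poly s (frac r).1) / tofrac (perm_poly s (frac r).2).

(* A forest of rooted trees on the vertex set {1,...,n} (vertex k+1 is k : 'I_n)
   given by its parent map: par v = None iff v is a root. *)
Definition is_forest (n : nat) (par : 'I_n -> option 'I_n) : Prop :=
  forall v : 'I_n, iter n (obind par) (Some v) = None.

Definition in_subtree (n : nat) (par : 'I_n -> option 'I_n) (j k : 'I_n) : bool :=
  [exists m : 'I_n, iter m (obind par) (Some k) == Some j].

Definition usub (n : nat) (par : 'I_n -> option 'I_n) (j : 'I_n) : RF n :=
  \sum_(k : 'I_n | in_subtree par j k) tofrac ('X_k : {mpoly rat[n]}).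

Definition fF (n : nat) (par : 'I_n -> option 'I_n) : RF n :=
  \prod_(j : 'I_n) (usub par j)^-1.

(* B_-(T_1) ⊔ B_+(i, T_2, ..., T_k), where i is the root of T_1:
   children of i become roots, i stays a root, the other roots become children of i. *)
Definition newpar (n : nat) (par : 'I_n -> option 'I_n) (i : 'I_n) : 'I_n -> option 'I_n :=
  fun c => if c == i then None else
           match par c with
           | None => Some i
           | Some p => if p == i then None else Some p
           end.

(* Main.v *)
Require Import Defs.
From HB Require Import structures.
From mathcomp Require Import all_boot all_order all_algebra all_fingroup.
From mathcomp Require Import fraction.
From mathcomp Require Import mpoly.
From mathcomp Require Import ring generic_quotient.
Import GRing.Theory.
Local Open Scope ring_scope.

Lemma iter_obind_None (n : nat) (par : 'I_n -> option 'I_n) k :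
  iter k (obind par) None = None.
Proof. by elim: k => //= k ->. Qed.

Lemma forest_bound (n : nat) (par : 'I_n -> option 'I_n) v m :
  iter m (obind par) (Some v) = None -> iter n (obind par) (Some v) = None.
Proof.
move=> Hm; case Hn: (iter n (obind par) (Some v)) => [w|] //; exfalso.
have Hsome k : (k <= n)%N -> iter k (obind par) (Some v) != None.
  move=> hk; apply/eqP => Hk.
  by move: Hn; have := iterD (n-k) k (obind par) (Some v); rewrite subnK // Hk iter_obind_None => ->.
pose g (k : 'I_n.+1) := odflt v (iter k (obind par) (Some v)).
have: ~~ injectiveb g.
  by apply/injectiveP => inj; have := leq_card _ inj; rewrite !card_ord ltnn.
case/injectivePn => a [b] ab gab.
have Hg (k : 'I_n.+1) : iter k (obind par) (Some v) = Some (g k).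
  have hk : (k <= n)%N by rewrite -ltnS.
  by move: (Hsome _ hk); rewrite /g; case: (iter _ _ _).
wlog lab : a b ab gab / (a < b)%N.
  move=> W; case: (ltngtP a b) => h; first exact: (W a b).
  - by apply: (W b a); rewrite // eq_sym.
  - by move: ab; rewrite -val_eqE /= h eqxx.
have Hab : iter a (obind par) (Some v) = iter b (obind par) (Some v) by rewrite !Hg gab.
have all k : iter k (obind par) (Some v) != None.
  elim/ltn_ind: k => k IH.
  case: (leqP k n) => hk; first exact: Hsome.
  have hb : (b <= k)%N by apply: leq_trans (ltnW hk); rewrite -ltnS.
  rewrite -(subnK hb) iterD -Hab -iterD; apply: IH.
  by rewrite -{2}(subnK hb) ltn_add2l.
by move: (all m); rewrite Hm.
Qed.

Lemma in_subtreeP {n : nat} {par : 'I_n -> option 'I_n} {j k} : is_forest par ->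
  reflect (exists m, iter m (obind par) (Some k) = Some j) (in_subtree par j k).
Proof.
move=> hF; apply: (iffP existsP) => [[m /eqP H]|[m H]]; first by exists m.
have hm : (m < n)%N.
  rewrite ltnNge; apply/negP => hm; move: H.
  by have := iterD (m - n) n (obind par) (Some k); rewrite subnK // hF iter_obind_None => ->.
by exists (Ordinal hm); apply/eqP.
Qed.

Lemma in_subtree_unf (n : nat) (par : 'I_n -> option 'I_n) j k : is_forest par ->
  in_subtree par j k = (k == j) || (if par k is Some p then in_subtree par j p else false).
Proof.
move=> hF; apply/idP/idP.
  case/(in_subtreeP hF) => [[|m]]; first by case=> ->; rewrite eqxx.
  rewrite iterSr /=; case: (par k) => [p|]; last by rewrite iter_obind_None.
  by move=> H; apply/orP; right; apply/(in_subtreeP hF); exists m.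
case/orP => [/eqP ->|]; first by apply/(in_subtreeP hF); exists 0.
case E: (par k) => [p|] //; case/(in_subtreeP hF) => m H.
by apply/(in_subtreeP hF); exists m.+1; rewrite iterSr /= E.
Qed.

Lemma newpar_forest (n : nat) (par : 'I_n -> option 'I_n) (i : 'I_n) :
  is_forest par -> par i = None -> is_forest (newpar par i).
Proof.
move=> hF hi v.
suff [m Hm] : exists m, iter m (obind (newpar par i)) (Some v) = None by exact: forest_bound Hm.
have [d] : exists d, iter d (obind par) (Some v) = None by exists n; exact: hF v.
elim: d v => [|d IH] v H; first discriminate H.
rewrite iterSr /= in H.
case: (eqVneq v i) => [->|vi]; first by exists 1; rewrite /= /newpar eqxx.
case E: (par v) H => [p|] H.
  case: (eqVneq p i) => [pi|pi].
    by exists 1; rewrite /= /newpar (negbTE vi) E pi eqxx.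
  have [m Hm] := IH p H.
  by exists m.+1; rewrite iterSr /= /newpar (negbTE vi) E (negbTE pi).
by exists 2; rewrite /= /newpar (negbTE vi) E /= eqxx.
Qed.

Lemma subA (n : nat) (par : 'I_n -> option 'I_n) (i j : 'I_n) :
  is_forest par -> par i = None -> j != i -> forall k,
  in_subtree (newpar par i) j k = in_subtree par j k.
Proof.
move=> hF hi ji k.
have hF' := newpar_forest _ _ _ hF hi.
have Hi : in_subtree par j i = false by rewrite in_subtree_unf // hi orbF eq_sym (negbTE ji).
have Hi' : in_subtree (newpar par i) j i = false.
  by rewrite in_subtree_unf // /newpar eqxx orbF eq_sym (negbTE ji).
have [d] : exists d, iter d (obind par) (Some k) = None by exists n; exact: hF k.
elim: d k => [|d IH] k H; first discriminate H.
rewrite iterSr /= in H.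
case: (eqVneq k i) => [->|ki]; first by rewrite Hi Hi'.
rewrite (@in_subtree_unf _ _ _ k hF') (@in_subtree_unf _ _ _ k hF) /newpar (negbTE ki).
case E: (par k) H => [p|] H; last by rewrite -/(newpar par i) ?Hi' ?Hii' ?orbT.
case: (eqVneq p i) => [->|pi]; first by rewrite Hi.
by rewrite -/(newpar par i) IH.
Qed.

Lemma subB (n : nat) (par : 'I_n -> option 'I_n) (i : 'I_n) :
  is_forest par -> par i = None -> forall k,
  in_subtree (newpar par i) i k = (k == i) || ~~ in_subtree par i k.
Proof.
move=> hF hi k.
have hF' := newpar_forest _ _ _ hF hi.
have Hii : in_subtree par i i by rewrite in_subtree_unf // eqxx.
have Hii' : in_subtree (newpar par i) i i by rewrite in_subtree_unf // eqxx.
have [d] : exists d, iter d (obind par) (Some k) = None by exists n; exact: hF k.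
elim: d k => [|d IH] k H; first discriminate H.
rewrite iterSr /= in H.
case: (eqVneq k i) => [->|ki]; first by rewrite Hii'.
rewrite (@in_subtree_unf _ _ _ k hF') (@in_subtree_unf _ _ _ k hF) /newpar (negbTE ki) /=.
case E: (par k) H => [p|] H; last by rewrite -/(newpar par i) ?Hi' ?Hii' ?orbT.
case: (eqVneq p i) => [->|pi]; first by rewrite Hii.
rewrite -/(newpar par i) IH //; by move/negPf: pi => ->.
Qed.

Lemma comp_mpolyA (n k l : nat) (p : {mpoly rat[n]}) (t : n.-tuple {mpoly rat[k]})
  (t2 : k.-tuple {mpoly rat[l]}) :
  (p \mPo t) \mPo t2 = p \mPo [tuple tnth t j \mPo t2 | j < n].
Proof.
rewrite [p \mPo t]comp_mpolyEX [RHS]comp_mpolyEX raddf_sum /=; apply: eq_bigr => m _.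
rewrite comp_mpolyZ !comp_mpolyX rmorph_prod /=; congr (_ *: _); apply: eq_bigr => j _.
by rewrite rmorphXn tnth_mktuple.
Qed.

Lemma uT (n : nat) (i k : 'I_n) :
  uvar (((tperm ord0 (lift ord0 i))^-1)%g (lift ord0 k)) =
  if k == i then - \sum_(j < n) 'X_j else 'X_k.
Proof.
rewrite tpermV /uvar; case: (eqVneq k i) => [->|ki]; first by rewrite tpermR unlift_none.
rewrite tpermD ?liftK // ?neq_lift //.
by rewrite (inj_eq (@lift_inj _ ord0)) eq_sym.
Qed.

Lemma PX (n : nat) (i k : 'I_n) :
  perm_poly (tperm ord0 (lift ord0 i)) 'X_k = if k == i then - \sum_(j < n) 'X_j else 'X_k.
Proof. by rewrite /perm_poly comp_mpolyXU -tnth_nth tnth_mktuple uT. Qed.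

Lemma PP (n : nat) (i : 'I_n) p :
  perm_poly (tperm ord0 (lift ord0 i)) (perm_poly (tperm ord0 (lift ord0 i)) p) = p.
Proof.
rewrite /perm_poly comp_mpolyA -[RHS]comp_mpoly_id; congr comp_mpoly.
apply: eq_from_tnth => j; rewrite !tnth_mktuple uT.
case: (eqVneq j i) => [->|ji]; last by rewrite comp_mpolyXU -tnth_nth tnth_mktuple uT (negPf ji).
rewrite rmorphN rmorph_sum /=.
under eq_bigr do rewrite comp_mpolyXU -tnth_nth tnth_mktuple uT.
rewrite (bigD1 i) //= eqxx [X in - (_ + X)](eq_bigr (fun k => 'X_k)); last by move=> k ki; rewrite (negPf ki).
rewrite [X in - (- X + _)](bigD1 i) //=.
by rewrite opprD opprK addrK.
Qed.

Lemma piE (R : idomainType) (r : {ratio R}) :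
  \pi_({fraction R})%qT r = tofrac (frac r).1 / tofrac (frac r).2.
Proof.
have hd := denom_ratioP r.
apply: (mulIf (x := tofrac (frac r).2)); first by rewrite tofrac_eq0.
rewrite divfK ?tofrac_eq0 //.
unlock tofrac.
change (FracField.mul (\pi_({fraction R})%qT r) (\pi_({fraction R})%qT (Ratio (frac r).2 1))
  = \pi_({fraction R})%qT (Ratio (frac r).1 1)).
rewrite -FracField.pi_mul.
apply/eqmodP; rewrite /= FracField.equivfE /FracField.mulf !numden_Ratio ?mulf_neq0 ?oner_neq0 //.
by rewrite !mulr1 mulrC eqxx.
Qed.

Lemma act_fracE (n : nat) (i : 'I_n) (a b : {mpoly rat[n]}) : b != 0 ->
  act_frac (tperm ord0 (lift ord0 i)) (tofrac a / tofrac b) =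
  tofrac (perm_poly (tperm ord0 (lift ord0 i)) a) / tofrac (perm_poly (tperm ord0 (lift ord0 i)) b).
Proof.
move=> hb; rewrite /act_frac.
set x := tofrac a / tofrac b.
have hx := piE _ (repr x); rewrite reprK in hx.
move: hx; set c := (frac (repr x)).1; set d := (frac (repr x)).2 => hx.
have hd : d != 0 := denom_ratioP _.
have hPinj : injective (perm_poly (tperm ord0 (lift ord0 i))) := can_inj (@PP n i).
have hP0 q : q != 0 -> perm_poly (tperm ord0 (lift ord0 i)) q != 0.
  move=> hq; apply: contra hq => /eqP h; apply/eqP; apply: hPinj.
  by rewrite h /perm_poly raddf0.
have e : a * d = c * b.
  by move: hx; rewrite /x => /eqP; rewrite eqr_div ?tofrac_eq0 // -!tofracM tofrac_eq => /eqP.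
apply/eqP; rewrite eqr_div ?tofrac_eq0 ?hP0 // -!tofracM tofrac_eq.
by rewrite /perm_poly -!rmorphM /= e.
Qed.

Definition Up (n : nat) (par : 'I_n -> option 'I_n) (j : 'I_n) : {mpoly rat[n]} :=
  \sum_(k | in_subtree par j k) 'X_k.
Arguments Up {n} par j.

Lemma fFE (n : nat) (par : 'I_n -> option 'I_n) :
  fF par = (tofrac (\prod_j Up par j))^-1.
Proof.
rewrite /fF rmorph_prod -prodfV; apply: eq_bigr => j _.
by rewrite /usub /Up rmorph_sum.
Qed.

Lemma Upnz (n : nat) (par : 'I_n -> option 'I_n) j : in_subtree par j j -> Up par j != 0.
Proof.
move=> hj; apply/eqP => h; have := congr1 (mcoeff U_(j)) h.
rewrite mcoeff0 /Up raddf_sum (bigD1 j) //= mcoeffXU eqxx big1 ?addr0 ?oner_eq0 //.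
by move=> k /andP[_ kj]; rewrite mcoeffXU (negPf kj).
Qed.

Lemma PU (n : nat) (par : 'I_n -> option 'I_n) (i j : 'I_n) :
  is_forest par -> par i = None ->
  perm_poly (tperm ord0 (lift ord0 i)) (Up par j) =
  if j == i then - Up (newpar par i) j else Up (newpar par i) j.
Proof.
move=> hF hi; rewrite /Up /perm_poly rmorph_sum /= -/(perm_poly _ _).
case: (eqVneq j i) => [->|ji].
  have Sii : in_subtree par i i by rewrite in_subtree_unf // eqxx.
  have e1 : \sum_(k | in_subtree par i k) perm_poly (tperm ord0 (lift ord0 i)) 'X_k
      = - \sum_(j < n) 'X_j + \sum_(k | in_subtree par i k && (k != i)) 'X_k.
    rewrite (bigD1 i) //= PX eqxx; congr (_ + _).
    by apply: eq_bigr => k /andP[_ ki]; rewrite PX (negPf ki).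
  have e2 : \sum_(k | in_subtree (newpar par i) i k) ('X_k : {mpoly rat[n]})
      = 'X_i + \sum_(k | ~~ in_subtree par i k) 'X_k.
    rewrite (bigD1 i) /=; last by rewrite subB // eqxx.
    congr (_ + _); apply: eq_bigl => k; rewrite subB //.
    by case: (eqVneq k i) => [->|ki]; rewrite ?Sii ?eqxx ?andbF ?andbT.
  have e3 : \sum_(j < n) ('X_j : {mpoly rat[n]}) = 'X_i
      + \sum_(k | in_subtree par i k && (k != i)) 'X_k + \sum_(k | ~~ in_subtree par i k) 'X_k.
    by rewrite (bigID (in_subtree par i)) /= (bigD1 i).
  rewrite e1 e2 e3; ring.
apply: eq_big => [k|k hk]; first by rewrite subA.
rewrite comp_mpolyXU -tnth_nth tnth_mktuple uT; case: (eqVneq k i) => [ek|] // ; move: hk.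
by rewrite ek in_subtree_unf // hi orbF eq_sym (negPf ji).
Qed.

Theorem mainTheorem18 (n : nat) (par : 'I_n -> option 'I_n) (i : 'I_n) :
  is_forest par -> par i = None ->
  is_forest (newpar par i) /\
  act_frac (tperm ord0 (lift ord0 i)) (fF par) = - fF (newpar par i).
Proof.
move=> hF hi; split; first exact: newpar_forest.
rewrite !fFE.
have hB : \prod_j Up par j != 0.
  by apply/prodf_neq0 => j _; apply: Upnz; rewrite in_subtree_unf // eqxx.
rewrite -[(tofrac _)^-1]mul1r -tofrac1 act_fracE //.
have -> : perm_poly (tperm ord0 (lift ord0 i)) 1 = 1 by rewrite /perm_poly rmorph1.
have -> : forall F : 'I_n -> {mpoly rat[n]}, perm_poly (tperm ord0 (lift ord0 i)) (\prod_j F j)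
  = \prod_j perm_poly (tperm ord0 (lift ord0 i)) (F j) by move=> F; rewrite /perm_poly rmorph_prod.
under eq_bigr do rewrite PU //.
rewrite (bigD1 i) //= eqxx.
under eq_bigr => j ji do rewrite (negPf ji).
by rewrite [in RHS](bigD1 i) //= mulNr tofracN tofrac1 mul1r invrN.
Qed.
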